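(* Let $X\in\mathbb R^{T\times K}$ have full column rank $K<T$ and let $\Gamma\in\mathbb R^{T\times T}$ satisfy $\|\Gamma\|<1-c$ for a constant $c\in(0,1)$. Then: (i) the matrices $I_T-\Gamma$, $I_T-P\Gamma$, $X'(I_T-\Gamma)X$ and $I_T+A_\Gamma M$ are invertible, where $A_\Gamma=(I_T-\Gamma)^{-1}\Gamma$; (ii) the following identities hold: $(I_T-\Gamma)M_\Gamma=M(I_T+A_\Gamma M)^{-1}$; $P_\Gamma=(I_T-P\Gamma)^{-1}P(I_T-\Gamma)$; $M_\Gamma=(I_T-P\Gamma)^{-1}M$; and for every $y\in\mathbb R^T$, $(X'(I_T-\Gamma)X)^{-1}X'(I_T-\Gamma)y=(X'X)^{-1}X'(I_T+A_\Gamma M)^{-1}y$; (iii) the matrix $(I_T-\Gamma)M_\Gamma+M_\Gamma'(I_T-\Gamma')$ is positive semi-definite, and there are constants $0<c'<C'$ depending only on $c$ such that $c'<\frac{T-K_\Gamma}{T-K}<C'$, where $T-K_\Gamma:=\operatorname{tr}[(I_T-\Gamma)M_\Gamma]$.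
   Context: $\|\cdot\|$ is the operator norm. $P=X(X'X)^{-1}X'$, $M=I_T-P$, $P_\Gamma=X(X'(I_T-\Gamma)X)^{-1}X'(I_T-\Gamma)$, $M_\Gamma=I_T-P_\Gamma$. *)

(* Defs.v *)
From HB Require Import structures.
From mathcomp Require Import all_boot all_order all_algebra.
From mathcomp Require Import classical_sets reals.
Set Implicit Arguments. Unset Strict Implicit. Unset Printing Implicit Defensive.
Import Order.TTheory GRing.Theory Num.Theory.
Local Open Scope ring_scope.
Local Open Scope classical_set_scope.

Section Defs.
Variable R : realType.

Definition norm2 (n : nat) (v : 'cV[R]_n) : R :=
  Num.sqrt (\sum_(i < n) v i 0 ^+ 2).

Definition opnorm (m n : nat) (A : 'M[R]_(m, n)) : R :=
  sup [set r : R | exists v : 'cV[R]_n, v != 0 /\ r = norm2 (A *m v) / norm2 v].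

Definition projP (T K : nat) (X : 'M[R]_(T, K)) : 'M[R]_T :=
  X *m invmx (X^T *m X) *m X^T.

Definition annM (T K : nat) (X : 'M[R]_(T, K)) : 'M[R]_T :=
  1%:M - projP X.

Definition projPG (T K : nat) (X : 'M[R]_(T, K)) (G : 'M[R]_T) : 'M[R]_T :=
  X *m invmx (X^T *m (1%:M - G) *m X) *m X^T *m (1%:M - G).

Definition annMG (T K : nat) (X : 'M[R]_(T, K)) (G : 'M[R]_T) : 'M[R]_T :=
  1%:M - projPG X G.

Definition AG (T : nat) (G : 'M[R]_T) : 'M[R]_T :=
  invmx (1%:M - G) *m G.

Definition psd (T : nat) (S : 'M[R]_T) : Prop :=
  forall v : 'cV[R]_T, 0 <= (v^T *m S *m v) 0 0.

End Defs.

(* Main.v *)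
Require Import Defs.
From HB Require Import structures.
From mathcomp Require Import all_boot all_order all_algebra.
From mathcomp Require Import classical_sets reals.
From mathcomp Require Import ring lra.
Set Implicit Arguments. Unset Strict Implicit. Unset Printing Implicit Defensive.
Import Order.TTheory GRing.Theory Num.Theory.
Local Open Scope ring_scope.

Section Aux.
Variable R : realType.

Definition dot (n : nat) (u v : 'cV[R]_n) : R := \sum_i u i 0 * v i 0.

Lemma dot_mx n (u v : 'cV[R]_n) : ((u^T) *m v) 0 0 = dot u v.
Proof. by rewrite mxE; apply: eq_bigr => i _; rewrite mxE. Qed.

Lemma dotC n (u v : 'cV[R]_n) : dot u v = dot v u.
Proof. by apply: eq_bigr => i _; rewrite mulrC. Qed.

Lemma dotBr n (u v w : 'cV[R]_n) : dot u (v - w) = dot u v - dot u w.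
Proof. by rewrite /dot -sumrB; apply: eq_bigr => i _; rewrite !mxE mulrBr. Qed.

Lemma dotBl n (u v w : 'cV[R]_n) : dot (v - w) u = dot v u - dot w u.
Proof. by rewrite dotC dotBr !(dotC u). Qed.

Lemma dotDr n (u v w : 'cV[R]_n) : dot u (v + w) = dot u v + dot u w.
Proof. by rewrite /dot -big_split; apply: eq_bigr => i _; rewrite !mxE mulrDr. Qed.

Lemma dotDl n (u v w : 'cV[R]_n) : dot (v + w) u = dot v u + dot w u.
Proof. by rewrite dotC dotDr !(dotC u). Qed.

Lemma dotNr n (u v : 'cV[R]_n) : dot u (- v) = - dot u v.
Proof. by rewrite /dot -sumrN; apply: eq_bigr => i _; rewrite !mxE mulrN. Qed.

Lemma dotNl n (u v : 'cV[R]_n) : dot (- v) u = - dot v u.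
Proof. by rewrite dotC dotNr dotC. Qed.

Lemma dotZl n a (u v : 'cV[R]_n) : dot (a *: u) v = a * dot u v.
Proof. by rewrite /dot mulr_sumr; apply: eq_bigr => i _; rewrite !mxE mulrA. Qed.

Lemma dotZr n a (u v : 'cV[R]_n) : dot u (a *: v) = a * dot u v.
Proof. by rewrite dotC dotZl dotC. Qed.

Lemma dot0r n (u : 'cV[R]_n) : dot u 0 = 0.
Proof. by rewrite /dot big1 // => i _; rewrite mxE mulr0. Qed.

Lemma dot_ge0 n (u : 'cV[R]_n) : 0 <= dot u u.
Proof. by apply: sumr_ge0 => i _; rewrite -expr2 sqr_ge0. Qed.

Lemma dot_eq0 n (u : 'cV[R]_n) : dot u u = 0 -> u = 0.
Proof.
move=> h; apply/matrixP => i j; rewrite (ord1 j) mxE.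
have hh : forall i : 'I_n, true -> 0 <= u i 0 * u i 0.
  by move=> k _; rewrite -expr2 sqr_ge0.
have := psumr_eq0P hh h (i:=i) isT.
by move/eqP; rewrite mulf_eq0 orbb => /eqP.
Qed.

Lemma dot_trick n t (a b : 'cV[R]_n) :
  2 * t * dot a b <= t ^+ 2 * dot a a + dot b b.
Proof.
have := dot_ge0 (t *: a - b).
rewrite dotBl !dotBr !dotZl !dotZr (dotC b a).
set x := dot a a; set y := dot a b; set z := dot b b.
move=> h.
have -> : t ^+ 2 * x + z = (t * (t * x) - t * y - (t * y - z)) + 2 * t * y by ring.
by rewrite lerDr.
Qed.

Lemma dot_mulmx n m (A : 'M[R]_(n, m)) u v : dot u (A *m v) = dot (A^T *m u) v.
Proof. by rewrite -!dot_mx trmx_mul trmxK mulmxA. Qed.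

Lemma sum_sq_expand n (a b : 'I_n -> R) x y :
  \sum_i (x * b i - y * a i) ^+ 2 =
  x ^+ 2 * \sum_i b i ^+ 2 - 2 * x * y * \sum_i a i * b i + y ^+ 2 * \sum_i a i ^+ 2.
Proof.
rewrite !mulr_sumr -sumrB -big_split; apply: eq_bigr => i _ /=; ring.
Qed.

Lemma cauchy_schwarz n (a b : 'I_n -> R) :
  (\sum_i a i * b i) ^+ 2 <= (\sum_i a i ^+ 2) * (\sum_i b i ^+ 2).
Proof.
set A := \sum_i a i ^+ 2; set B := \sum_i b i ^+ 2; set C := \sum_i a i * b i.
have hA : 0 <= A by apply: sumr_ge0 => i _; rewrite sqr_ge0.
have := sum_sq_expand a b A C; rewrite -/A -/B -/C => e.
have h0 : 0 <= \sum_i (A * b i - C * a i) ^+ 2 by apply: sumr_ge0 => i _; rewrite sqr_ge0.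
rewrite e in h0.
case: (eqVneq A 0) => hA0.
  have ha : forall i, a i = 0.
    move=> i; have := psumr_eq0P (P := predT) (F := fun i => a i ^+ 2)
      (fun i _ => sqr_ge0 (a i)) hA0 (i := i) isT.
    by move/eqP; rewrite sqrf_eq0 => /eqP.
  have -> : C = 0 by rewrite /C big1 // => i _; rewrite ha mul0r.
  by rewrite hA0 expr0n /= mul0r.
have hAp : 0 < A by rewrite lt_def hA0 hA.
have : 0 <= A * (A * B - C ^+ 2).
  by move: h0; congr (_ <= _); ring.
by rewrite pmulr_rge0 // subr_ge0.
Qed.


Lemma norm2E n (v : 'cV[R]_n) : norm2 v = Num.sqrt (dot v v).
Proof. by rewrite /norm2; congr Num.sqrt; apply: eq_bigr => i _; rewrite expr2. Qed.

Lemma mulmx_sq_bound n m (G : 'M[R]_(n, m)) v :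
  dot (G *m v) (G *m v) <= (\sum_i \sum_j G i j ^+ 2) * dot v v.
Proof.
rewrite /dot mulr_suml; apply: ler_sum => i _.
rewrite mxE -expr2.
have -> : \sum_j v j 0 * v j 0 = \sum_j v j 0 ^+ 2 by apply: eq_bigr => j _; rewrite expr2.
exact: (cauchy_schwarz (fun j => G i j) (fun j => v j 0)).
Qed.

Lemma opnorm_bound n (G : 'M[R]_n) d : opnorm G < d ->
  forall v, dot (G *m v) (G *m v) <= d ^+ 2 * dot v v.
Proof.
move=> hG v.
case: (eqVneq v 0) => [->|nz]; first by rewrite mulmx0 !dot0r mulr0.
set F := \sum_i \sum_j G i j ^+ 2.
have hF : 0 <= F by apply: sumr_ge0 => i _; apply: sumr_ge0 => j _; rewrite sqr_ge0.
have npos : forall w : 'cV[R]_n, w != 0 -> 0 < norm2 w.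
  move=> w wnz; rewrite norm2E sqrtr_gt0 lt_def dot_ge0 andbT.
  by apply/eqP => /dot_eq0 h; rewrite h eqxx in wnz.
have ratio_ub : forall w : 'cV[R]_n, w != 0 -> norm2 (G *m w) / norm2 w <= Num.sqrt F.
  move=> w wnz; rewrite ler_pdivrMr ?npos // !norm2E -sqrtrM // ler_sqrt.
    exact: mulmx_sq_bound.
  by rewrite mulr_ge0 ?dot_ge0.
have hs : has_sup [set r : R | exists v : 'cV[R]_n, v != 0 /\ r = norm2 (G *m v) / norm2 v].
  split; first by exists (norm2 (G *m v) / norm2 v); exists v.
  by exists (Num.sqrt F) => r [w [wnz ->]]; apply: ratio_ub.
have hr : norm2 (G *m v) / norm2 v <= opnorm G.
  by apply: sup_upper_bound => //; exists v.
have h1 : norm2 (G *m v) <= d * norm2 v.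
  rewrite -ler_pdivrMr ?npos //; apply: (le_trans hr); exact: ltW.
have h0 : 0 <= norm2 (G *m v) by rewrite norm2E sqrtr_ge0.
have := ler_pM h0 h0 h1 h1.
rewrite !norm2E -!expr2 sqr_sqrtr ?dot_ge0 // exprMn sqr_sqrtr ?dot_ge0 //.
Qed.

End Aux.
Section Gen.
Variable R : realType.

Lemma unit_of_inj n (A : 'M[R]_n) : (forall v : 'cV_n, A *m v = 0 -> v = 0) -> A \in unitmx.
Proof.
move=> h; rewrite -unitmx_tr -row_free_unit; apply: inj_row_free => v hv.
have : A *m v^T = 0 by rewrite -(trmxK (A *m v^T)) trmx_mul trmxK hv trmx0.
by move/h => e; rewrite -(trmxK v) e trmx0.
Qed.

Lemma colfree_inj T K (X : 'M[R]_(T, K)) : \rank X = K -> forall v : 'cV_K, X *m v = 0 -> v = 0.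
Proof.
move=> hrk v hv.
have rf : row_free X^T by rewrite /row_free mxrank_tr hrk.
have : v^T *m X^T = 0 *m X^T by rewrite -trmx_mul hv trmx0 mul0mx.
by move/(row_free_inj rf) => e; rewrite -(trmxK v) e trmx0.
Qed.

Lemma trace_cols n m (A : 'M[R]_(n, m)) (B : 'M[R]_n) :
  \tr (A^T *m B *m A) = \sum_i dot (col i A) (B *m col i A).
Proof.
rewrite /mxtrace; apply: eq_bigr => i _; rewrite -dot_mx mulmxA !mxE.
apply: eq_bigr => k _; rewrite !mxE; congr (_ * _).
by apply: eq_bigr => j _; rewrite !mxE.
Qed.

End Gen.
Section Main.
Variable R : realType.
Variable c : R.
Hypothesis hc0 : 0 < c.
Hypothesis hc1 : c < 1.
Variables T K : nat.
Variable X : 'M[R]_(T, K).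
Variable G : 'M[R]_T.
Hypothesis hKT : (K < T)%N.
Hypothesis hrk : \rank X = K.
Hypothesis hG : opnorm G < 1 - c.

Let d := 1 - c.
Let S : 'M[R]_T := 1%:M - G.
Let Q := X^T *m X.
Let N := X^T *m S *m X.
Let P := projP X.
Let M := annM X.
Let iQ := invmx Q.
Let iN := invmx N.
Let iS := invmx S.

Lemma hd0 : 0 < d. Proof. by rewrite /d subr_gt0. Qed.

Lemma Gsq (v : 'cV[R]_T) : dot (G *m v) (G *m v) <= d ^+ 2 * dot v v.
Proof. exact: opnorm_bound. Qed.

Lemma Gdot (v : 'cV[R]_T) : dot v (G *m v) <= d * dot v v.
Proof.
have := dot_trick d v (G *m v); have := Gsq v => h1 h2.
have : 2 * d * dot v (G *m v) <= 2 * d * (d * dot v v).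
  apply: (le_trans h2).
  have -> : 2 * d * (d * dot v v) = d ^+ 2 * dot v v + d ^+ 2 * dot v v by ring.
  by rewrite lerD2l.
by rewrite ler_pM2l // mulr_gt0 ?hd0.
Qed.

Lemma GdotN (v : 'cV[R]_T) : - dot v (G *m v) <= d * dot v v.
Proof.
have := dot_trick d v (- (G *m v)); have := Gsq v => h1.
rewrite dotNr dotNl dotNr opprK => h2.
have : 2 * d * (- dot v (G *m v)) <= 2 * d * (d * dot v v).
  apply: (le_trans h2).
  have -> : 2 * d * (d * dot v v) = d ^+ 2 * dot v v + d ^+ 2 * dot v v by ring.
  by rewrite lerD2l.
by rewrite ler_pM2l // mulr_gt0 ?hd0.
Qed.

Lemma Sv (v : 'cV[R]_T) : S *m v = v - G *m v.
Proof. by rewrite /S mulmxBl mul1mx. Qed.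

Lemma Spos (v : 'cV[R]_T) : c * dot v v <= dot v (S *m v).
Proof. rewrite Sv dotBr; have := Gdot v; rewrite /d; lra. Qed.

Lemma Supp (v : 'cV[R]_T) : dot v (S *m v) <= (2 - c) * dot v v.
Proof. rewrite Sv dotBr; have := GdotN v; rewrite /d; lra. Qed.

Lemma Ssq (v : 'cV[R]_T) : dot (S *m v) (S *m v) <= (2 - c) ^+ 2 * dot v v.
Proof.
rewrite Sv dotBr !dotBl (dotC (G *m v) v).
have := GdotN v; have := Gsq v; have := dot_ge0 v; rewrite /d.
set a := dot v v; set b := dot v (G *m v); set e := dot (G *m v) (G *m v).
move=> h0 h1 h2.
have -> : (2 - c) ^+ 2 * a = a + 2 * ((1 - c) * a) + (1 - c) ^+ 2 * a by ring.
lra.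
Qed.


Lemma Xinj (v : 'cV[R]_K) : X *m v = 0 -> v = 0.
Proof. exact: colfree_inj. Qed.

Lemma dotX (a : 'cV[R]_K) (w : 'cV[R]_T) : dot a (X^T *m w) = dot (X *m a) w.
Proof. by rewrite dot_mulmx trmxK. Qed.

Lemma Qunit : Q \in unitmx.
Proof.
apply: unit_of_inj => v hv; apply: Xinj; apply: dot_eq0.
have : dot v (Q *m v) = 0 by rewrite hv dot0r.
by rewrite /Q -mulmxA dotX.
Qed.

Lemma Nunit : N \in unitmx.
Proof.
apply: unit_of_inj => v hv; apply: Xinj; apply: dot_eq0.
have h : dot v (N *m v) = 0 by rewrite hv dot0r.
move: h; rewrite /N -!mulmxA dotX => h.
have := Spos (X *m v); rewrite h => h1.
apply: le_anti; rewrite dot_ge0 andbT.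
by rewrite -(pmulr_rle0 _ hc0).
Qed.

Lemma Sunit : S \in unitmx.
Proof.
apply: unit_of_inj => v hv; apply: dot_eq0.
have := Spos v; rewrite hv dot0r => h1.
apply: le_anti; rewrite dot_ge0 andbT.
by rewrite -(pmulr_rle0 _ hc0).
Qed.

Lemma XtP : X^T *m P = X^T.
Proof.
have -> : X^T *m P = Q *m iQ *m X^T by rewrite /P /projP !mulmxA.
by rewrite mulmxV ?Qunit // mul1mx.
Qed.

Lemma PX : P *m X = X.
Proof.
have -> : P *m X = X *m (iQ *m Q) by rewrite /P /projP !mulmxA.
by rewrite mulVmx ?Qunit // mulmx1.
Qed.

Lemma XtM : X^T *m M = 0.
Proof. by rewrite /M /annM mulmxBr mulmx1 -/P XtP subrr. Qed.

Lemma MX : M *m X = 0.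
Proof. by rewrite /M /annM mulmxBl mul1mx -/P PX subrr. Qed.

Lemma Ptr : P^T = P.
Proof.
rewrite /P /projP !trmx_mul trmxK trmx_inv trmx_mul trmxK.
by rewrite !mulmxA.
Qed.

Lemma Mtr : M^T = M.
Proof. by rewrite /M /annM raddfB /= trmx1 -/P Ptr. Qed.

Lemma PP : P *m P = P.
Proof.
have -> : P *m P = P *m X *m iQ *m X^T by rewrite {2}/P /projP !mulmxA.
by rewrite PX /P /projP.
Qed.

Lemma MP : M *m P = 0.
Proof. by rewrite /M /annM mulmxBl mul1mx -/P PP subrr. Qed.

Lemma MM : M *m M = M.
Proof. by rewrite {2}/M /annM mulmxBr mulmx1 -/P MP subr0. Qed.

Let PPG := projPG X G.
Let MG := annMG X G.

Lemma PPGE : PPG = X *m iN *m X^T *m S.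
Proof. by []. Qed.

Lemma XtSMG : X^T *m S *m MG = 0.
Proof.
rewrite /MG /annMG mulmxBr mulmx1 -/PPG PPGE.
have -> : X^T *m S *m (X *m iN *m X^T *m S) = N *m iN *m X^T *m S by rewrite !mulmxA.
by rewrite mulmxV ?Nunit // mul1mx subrr.
Qed.

Lemma MGX : MG *m X = 0.
Proof.
rewrite /MG /annMG mulmxBl mul1mx -/PPG PPGE.
have -> : X *m iN *m X^T *m S *m X = X *m (iN *m N) by rewrite !mulmxA.
by rewrite mulVmx ?Nunit // mulmx1 subrr.
Qed.

Lemma MGP : MG *m P = 0.
Proof. by rewrite /P /projP !mulmxA MGX !mul0mx. Qed.

Lemma MGM : MG *m M = MG.
Proof. by rewrite /M /annM mulmxBr mulmx1 -/P MGP subr0. Qed.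

Lemma MMG : M *m MG = M.
Proof.
rewrite /MG /annMG mulmxBr mulmx1 -/PPG PPGE.
by rewrite !mulmxA MX !mul0mx subr0.
Qed.

Lemma MSMG : M *m (S *m MG) = S *m MG.
Proof.
rewrite {1}/M /annM mulmxBl mul1mx.
have -> : P *m (S *m MG) = X *m iQ *m (X^T *m S *m MG) by rewrite /P /projP !mulmxA.
by rewrite XtSMG mulmx0 subr0.
Qed.

Lemma core2 : (1%:M - P *m G) *m PPG = P *m S.
Proof.
have eG : P *m G = P - P *m S by rewrite /S mulmxBr mulmx1 opprB subrKC.
have e1 : P *m PPG = PPG.
  rewrite PPGE.
  have -> : P *m (X *m iN *m X^T *m S) = P *m X *m iN *m X^T *m S by rewrite !mulmxA.
  by rewrite PX.
have e2 : P *m S *m PPG = P *m S.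
  rewrite PPGE.
  have -> : P *m S *m (X *m iN *m X^T *m S) = X *m iQ *m (X^T *m S *m X *m iN) *m X^T *m S
    by rewrite /P /projP !mulmxA.
  by rewrite mulmxV ?Nunit // mulmx1 /P /projP.
rewrite mulmxBl mul1mx eG mulmxBl e1 e2.
by rewrite opprB subrKC.
Qed.

Lemma IPGunit : (1%:M - P *m G) \in unitmx.
Proof.
apply: unit_of_inj => v hv.
have ev : v = P *m G *m v by apply/eqP; rewrite -subr_eq0 -{1}(mul1mx v) -mulmxBl hv.
set a := iQ *m X^T *m G *m v.
have eva : v = X *m a by rewrite {1}ev /a /P /projP !mulmxA.
have hNa : N *m a = 0.
  have -> : N *m a = X^T *m S *m v by rewrite eva /N !mulmxA.
  rewrite -mulmxA Sv mulmxBr {1}ev.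
  have -> : X^T *m (P *m G *m v) = X^T *m P *m G *m v by rewrite !mulmxA.
  by rewrite XtP !mulmxA subrr.
have : a = 0 by rewrite -(mulKmx Nunit a) hNa mulmx0.
by move=> a0; rewrite eva a0 mulmx0.
Qed.

Lemma IGPunit : (1%:M - G *m P) \in unitmx.
Proof.
apply: unit_of_inj => v hv.
have ev : v = G *m P *m v by apply/eqP; rewrite -subr_eq0 -{1}(mul1mx v) -mulmxBl hv.
have : (1%:M - P *m G) *m (P *m v) = 0.
  rewrite mulmxBl mul1mx.
  have -> : P *m G *m (P *m v) = P *m (G *m P *m v) by rewrite !mulmxA.
  by rewrite -ev subrr.
move=> h; have Pv0 : P *m v = 0 by rewrite -(mulKmx IPGunit (P *m v)) h mulmx0.
by rewrite ev -mulmxA Pv0 mulmx0.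
Qed.


Let W2 := 1%:M + AG G *m M.

Lemma AGE : AG G = iS - 1%:M.
Proof.
have eG : G = 1%:M - S by rewrite /S opprB subrKC.
have -> : AG G = iS *m G by [].
by rewrite [in LHS]eG mulmxBr mulmx1 mulVmx ?Sunit.
Qed.

Lemma e1M : 1%:M - M = P.
Proof. by rewrite /M /annM opprB subrKC. Qed.

Lemma W2E1 : W2 = P + iS *m M.
Proof.
rewrite /W2 AGE mulmxBl mul1mx -e1M.
by rewrite addrCA addrC.
Qed.

Lemma W2E2 : W2 = iS *m (1%:M - G *m P).
Proof.
have eG : G = 1%:M - S by rewrite /S opprB subrKC.
rewrite W2E1 [in RHS]mulmxBr [in RHS]mulmx1 [in RHS]mulmxA.
have -> : iS *m G = iS - 1%:M by rewrite -AGE.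
rewrite [in RHS]mulmxBl mul1mx /M /annM mulmxBr mulmx1 -/P.
by rewrite opprB addrCA.
Qed.

Lemma W2unit : W2 \in unitmx.
Proof. by rewrite W2E2 unitmx_mul unitmx_inv Sunit IGPunit. Qed.

Lemma ident1 : S *m MG = M *m invmx W2.
Proof.
suff h : S *m MG *m W2 = M by rewrite -h mulmxK ?W2unit.
rewrite W2E1 mulmxDr -mulmxA MGP mulmx0 add0r.
rewrite /MG /annMG mulmxBr mulmx1 -/PPG mulmxBl mulKVmx ?Sunit // PPGE.
have -> : S *m (X *m iN *m X^T *m S) *m (iS *m M) = S *m X *m iN *m (X^T *m (S *m iS) *m M)
  by rewrite !mulmxA.
by rewrite mulmxV ?Sunit // mulmx1 XtM mulmx0 subr0.
Qed.

Lemma ident2 : PPG = invmx (1%:M - P *m G) *m P *m S.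
Proof. by rewrite -mulmxA -core2 mulKmx ?IPGunit. Qed.

Lemma ident3 : MG = invmx (1%:M - P *m G) *m M.
Proof.
suff h : (1%:M - P *m G) *m MG = M by rewrite -h mulKmx ?IPGunit.
rewrite /MG /annMG mulmxBr mulmx1 -/PPG core2.
have eGS : G + S = 1%:M by rewrite /S addrC subrK.
by rewrite -addrA -opprD -mulmxDr eGS mulmx1.
Qed.

Lemma ident4 (y : 'cV[R]_T) :
  invmx N *m X^T *m S *m y = invmx Q *m X^T *m invmx W2 *m y.
Proof.
suff h : invmx N *m X^T *m S *m W2 = invmx Q *m X^T.
  by rewrite -h mulmxK ?W2unit.
rewrite W2E1 mulmxDr.
have -> : invmx N *m X^T *m S *m (iS *m M) = invmx N *m (X^T *m (S *m iS) *m M)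
  by rewrite !mulmxA.
rewrite mulmxV ?Sunit // mulmx1 XtM mulmx0 addr0.
have -> : invmx N *m X^T *m S *m P = (invmx N *m N) *m iQ *m X^T
  by rewrite /P /projP /N !mulmxA.
by rewrite mulVmx ?Nunit // mul1mx.
Qed.


Lemma quadMG (v : 'cV[R]_T) : dot v (S *m (MG *m v)) = dot (MG *m v) (S *m (MG *m v)).
Proof.
have ev : v = MG *m v + PPG *m v by rewrite /MG /annMG mulmxBl mul1mx -/PPG subrK.
rewrite {1}ev dotDl.
have -> : PPG *m v = X *m (iN *m X^T *m S *m v) by rewrite PPGE !mulmxA.
rewrite -dotX.
have -> : X^T *m (S *m (MG *m v)) = X^T *m S *m MG *m v by rewrite !mulmxA.
by rewrite XtSMG mul0mx dot0r addr0.
Qed.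

Lemma psd_main : psd (S *m MG + MG^T *m (1%:M - G^T)).
Proof.
have eST : 1%:M - G^T = S^T by rewrite /S raddfB /= trmx1.
move=> v; rewrite eST -mulmxA dot_mx mulmxDl dotDr.
have -> : dot v (MG^T *m S^T *m v) = dot v (S *m (MG *m v)).
  by rewrite -trmx_mul dot_mulmx trmxK dotC mulmxA.
rewrite mulmxA -mulmxA quadMG.
have := Spos (MG *m v); have := dot_ge0 (MG *m v) => h1 h2.
have : 0 <= c * dot (MG *m v) (MG *m v) by rewrite mulr_ge0 // ltW.
lra.
Qed.

Lemma Mcontr (w : 'cV[R]_T) : dot (M *m w) (M *m w) <= dot w w.
Proof.
have ew : w = M *m w + P *m w by rewrite -mulmxDl -e1M addrC subrK mul1mx.
have h0 : dot (M *m w) (P *m w) = 0.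
  have PM : P *m M = 0 by rewrite /M /annM mulmxBr mulmx1 -/P PP subrr.
  by rewrite dot_mulmx Ptr mulmxA PM mul0mx dotC dot0r.
rewrite {3 4}ew dotDl !dotDr (dotC (P *m w) (M *m w)) h0.
have := dot_ge0 (P *m w); lra.
Qed.

Lemma MMcol (i : 'I_T) : M *m col i M = col i M.
Proof. by rewrite !colE mulmxA MM. Qed.

Lemma trM : \tr M = (T - K)%:R.
Proof.
rewrite /M /annM raddfB /= mxtrace1 -/P /P /projP -mulmxA mxtrace_mulC -mulmxA.
rewrite mulVmx ?Qunit // mxtrace1 natrB //; exact: ltnW.
Qed.

Lemma tr_decomp : \tr (S *m MG) =
  \sum_i dot (MG *m col i M) (S *m (MG *m col i M)).
Proof.
have -> : S *m MG = M^T *m (S *m MG) *m M by rewrite Mtr MSMG -mulmxA MGM.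
rewrite trace_cols; apply: eq_bigr => i _.
by rewrite -quadMG mulmxA.
Qed.

Lemma sum_mm : \sum_i dot (col i M) (col i M) = (T - K)%:R.
Proof.
rewrite -trM.
have -> : \tr M = \tr (M^T *m 1%:M *m M) by rewrite mulmx1 Mtr MM.
by rewrite trace_cols; apply: eq_bigr => i _; rewrite mul1mx.
Qed.

Lemma trace_lower : c * (T - K)%:R <= \tr (S *m MG).
Proof.
rewrite tr_decomp -sum_mm mulr_sumr; apply: ler_sum => i _.
set u := MG *m col i M.
have hMu : M *m u = col i M by rewrite /u mulmxA MMG MMcol.
apply: le_trans (Spos u).
by rewrite ler_pM2l // -{1 2}hMu Mcontr.
Qed.

Lemma term_upper (i : 'I_T) :
  c * dot (MG *m col i M) (S *m (MG *m col i M)) <=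
    (2 - c) * ((2 - c) ^+ 2 / c) * dot (col i M) (col i M).
Proof.
set e := 2 - c; set t := e ^+ 2 / c.
set u := MG *m col i M; set m := col i M.
have hMu : M *m u = m by rewrite /u mulmxA MMG MMcol.
have he : 0 < e by rewrite /e subr_gt0 (lt_trans hc1) // ltr1n.
have ht : 0 < t by rewrite /t divr_gt0 // exprn_gt0.
have etc : e ^+ 2 = t * c by rewrite /t mulfVK // gt_eqF.
set x := dot u u; set y := dot m m; set z := dot u (S *m u).
have h1 : c * x <= z := Spos u.
have h2 : z <= e * x := Supp u.
have hSu : S *m u = M *m (S *m u) by rewrite /u !mulmxA -(mulmxA M) MSMG.
have h3 : z = dot m (S *m u) by rewrite /z {1}hSu dot_mulmx Mtr hMu.
have h4 : 2 * t * z <= t ^+ 2 * y + t * c * x.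
  rewrite h3; apply: le_trans (dot_trick t m (S *m u)) _.
  by rewrite lerD2l -etc; exact: Ssq.
have h5 : 2 * t * (c * x) <= 2 * t * z by rewrite ler_pM2l // mulr_gt0.
have h6 : t * (c * x) <= t * (t * y).
  have : 2 * t * (c * x) <= t ^+ 2 * y + t * c * x := le_trans h5 h4.
  have -> : 2 * t * (c * x) = t * (c * x) + t * c * x by ring.
  have -> : t ^+ 2 * y + t * c * x = t * (t * y) + t * c * x by ring.
  by rewrite lerD2r.
rewrite ler_pM2l // in h6.
have h7 : c * z <= c * (e * x) by rewrite ler_pM2l.
apply: (le_trans h7).
have -> : c * (e * x) = e * (c * x) by ring.
have -> : e * t * y = e * (t * y) by ring.
by rewrite ler_pM2l.
Qed.

Lemma trace_upper :
  c * \tr (S *m MG) <= (2 - c) * ((2 - c) ^+ 2 / c) * (T - K)%:R.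
Proof.
rewrite tr_decomp -sum_mm !mulr_sumr; apply: ler_sum => i _.
exact: term_upper.
Qed.


Lemma inner :
    [/\ (1%:M - G) \in unitmx,
        (1%:M - projP X *m G) \in unitmx,
        (X^T *m (1%:M - G) *m X) \in unitmx
      & (1%:M + AG G *m annM X) \in unitmx] /\
    [/\ (1%:M - G) *m annMG X G = annM X *m invmx (1%:M + AG G *m annM X),
        projPG X G = invmx (1%:M - projP X *m G) *m projP X *m (1%:M - G),
        annMG X G = invmx (1%:M - projP X *m G) *m annM X
      & forall y : 'cV[R]_T,
          invmx (X^T *m (1%:M - G) *m X) *m X^T *m (1%:M - G) *m y =
          invmx (X^T *m X) *m X^T *m invmx (1%:M + AG G *m annM X) *m y] /\
    psd ((1%:M - G) *m annMG X G + (annMG X G)^T *m (1%:M - G^T)) /\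
    c / 2 < \tr ((1%:M - G) *m annMG X G) / (T - K)%:R /\
    \tr ((1%:M - G) *m annMG X G) / (T - K)%:R <
      (2 - c) * ((2 - c) ^+ 2 / c) / c + 1.
Proof.
split; first by split; [exact: Sunit | exact: IPGunit | exact: Nunit | exact: W2unit].
split; first by split; [exact: ident1 | exact: ident2 | exact: ident3 | exact: ident4].
split; first exact: psd_main.
have hD : 0 < (T - K)%:R :> R by rewrite ltr0n subn_gt0.
have hl := trace_lower; have hu := trace_upper.
set tr := \tr (S *m MG) in hl hu.
change (\tr ((1%:M - G) *m annMG X G)) with tr.
set E := (2 - c) * ((2 - c) ^+ 2 / c) in hu *.
split.
  apply: (lt_le_trans (y := c)); first by rewrite ltr_pdivrMr // ltr_pMr // ltr1n.
  by rewrite ler_pdivlMr.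
apply: (le_lt_trans (y := E / c)); last by rewrite ltrDl ltr01.
by rewrite ler_pdivrMr // mulrAC ler_pdivlMr // mulrC.
Qed.

End Main.

Theorem mainTheorem9 (R : realType) (c : R) (hc0 : 0 < c) (hc1 : c < 1) :
  exists c' C' : R, 0 < c' /\ c' < C' /\
  forall (T K : nat) (X : 'M[R]_(T, K)) (G : 'M[R]_T),
    (K < T)%N -> \rank X = K -> opnorm G < 1 - c ->
    (* (i) invertibility *)
    [/\ (1%:M - G) \in unitmx,
        (1%:M - projP X *m G) \in unitmx,
        (X^T *m (1%:M - G) *m X) \in unitmx
      & (1%:M + AG G *m annM X) \in unitmx] /\
    (* (ii) identities *)
    [/\ (1%:M - G) *m annMG X G = annM X *m invmx (1%:M + AG G *m annM X),
        projPG X G = invmx (1%:M - projP X *m G) *m projP X *m (1%:M - G),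
        annMG X G = invmx (1%:M - projP X *m G) *m annM X
      & forall y : 'cV[R]_T,
          invmx (X^T *m (1%:M - G) *m X) *m X^T *m (1%:M - G) *m y =
          invmx (X^T *m X) *m X^T *m invmx (1%:M + AG G *m annM X) *m y] /\
    (* (iii) PSD and trace ratio bounds *)
    psd ((1%:M - G) *m annMG X G + (annMG X G)^T *m (1%:M - G^T)) /\
    c' < \tr ((1%:M - G) *m annMG X G) / (T - K)%:R /\
    \tr ((1%:M - G) *m annMG X G) / (T - K)%:R < C'.
Proof.
exists (c / 2), ((2 - c) * ((2 - c) ^+ 2 / c) / c + 1).
have he : 0 < 2 - c by rewrite subr_gt0 (lt_trans hc1) // ltr1n.
split; first by rewrite divr_gt0.
split.
  apply: (lt_le_trans (y := 1)).
    by rewrite ltr_pdivrMr // mul1r (lt_trans hc1) // ltr1n.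
  rewrite lerDr; apply: divr_ge0; last exact: ltW.
  apply: mulr_ge0; first exact: ltW.
  by apply: divr_ge0; [apply: exprn_ge0; exact: ltW | exact: ltW].
move=> T K X G hKT hrk hG.
exact: (inner hc0 hc1 hKT hrk hG).
Qed.
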